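(* Let $n\ge p\ge1$, $U\in St(n,p)$, $\Delta\in T_USt(n,p)$, and let $\gamma(t)=\mathrm{Exp}_U(t\Delta)$ be the geodesic of $St(n,p)$ under the Euclidean metric, regarded as a curve in $\mathbb R^{n\times p}$. Then there exist $m\in\mathbb N$, real numbers $a_1,\dots,a_m,b_1,\dots,b_m$, a matrix $C_0\in\mathbb R^{n\times p}$ and matrices $E_1,\dots,E_{2m}\in\mathbb R^{n\times p}$ that are orthonormal with respect to $\langle X,Y\rangle=\operatorname{tr}(X^TY)$ such that for all $t\in\mathbb R$ $$\gamma(t)=C_0+\sum_{i=1}^m a_i\big(\cos(b_it)\,E_{2i-1}+\sin(b_it)\,E_{2i}\big).$$ Equivalently, up to a Euclidean isometry, $\gamma(t)=(a_1\cos(b_1t),a_1\sin(b_1t),\dots,a_m\cos(b_mt),a_m\sin(b_mt))^T$ (padded with zeros).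
   Context: $St(n,p)=\{U\in\mathbb R^{n\times p}: U^TU=I_p\}$ with $T_USt(n,p)=\{\Delta: U^T\Delta=-\Delta^TU\}$. The Euclidean metric is the restriction of $\operatorname{tr}(X^TY)$ to tangent spaces, and $\mathrm{Exp}_U$ is its Riemannian exponential map; explicitly $\mathrm{Exp}_U(t\Delta)=\begin{pmatrix}U&Q\end{pmatrix}\exp_m\!\left(t\begin{pmatrix}2A&-B^T\\ B&0\end{pmatrix}\right)\begin{pmatrix}I_p\\0\end{pmatrix}\exp_m(-tA)$ with $A=U^T\Delta$, $QB=(I-UU^T)\Delta$, $Q$ with orthonormal columns orthogonal to $U$, $\exp_m$ the matrix exponential. *)

(* Defs.v *)
From HB Require Import structures.
From mathcomp Require Import all_boot all_order all_algebra.
From mathcomp Require Import all_classical all_reals all_analysis.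
Set Implicit Arguments. Unset Strict Implicit. Unset Printing Implicit Defensive.
Import Order.TTheory GRing.Theory Num.Theory.
Import numFieldNormedType.Exports.
Local Open Scope ring_scope.

Definition expm (R : realType) (q : nat) (A : 'M[R]_q) : 'M[R]_q :=
  limn (series (fun k : nat => (k`!%:R)^-1 *: A ^+ k)).

Definition frob (R : realType) (n p : nat) (X Y : 'M[R]_(n, p)) : R :=
  \tr (X^T *m Y).

Definition stiefel (R : realType) (n p : nat) (U : 'M[R]_(n, p)) : Prop :=
  U^T *m U = 1%:M.
Definition tangent_stiefel (R : realType) (n p : nat) (U D : 'M[R]_(n, p)) : Prop :=
  U^T *m D = - (D^T *m U).

Definition QB_decomp (R : realType) (n p k : nat) (U D : 'M[R]_(n, p))
  (Q : 'M[R]_(n, k)) (B : 'M[R]_(k, p)) : Prop :=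
  [/\ Q^T *m Q = 1%:M, U^T *m Q = 0 & Q *m B = (1%:M - U *m U^T) *m D].

(* Exp_U(t D) for the Euclidean metric, explicit formula of the context. *)
Definition stiefel_exp (R : realType) (n p k : nat) (U D : 'M[R]_(n, p))
  (Q : 'M[R]_(n, k)) (B : 'M[R]_(k, p)) (t : R) : 'M[R]_(n, p) :=
  let A := U^T *m D in
  row_mx U Q
  *m expm (t *: block_mx (2%:R *: A) (- B^T) B (0 : 'M[R]_(k, k)))
  *m col_mx (1%:M : 'M[R]_p) (0 : 'M[R]_(k, p))
  *m expm (- t *: A).

(* Main.v *)
Require Import Defs.
From HB Require Import structures.
From mathcomp Require Import all_boot all_order all_algebra.
From mathcomp Require Import all_classical all_reals all_analysis.
From mathcomp Require Import ring lra.
From mathcomp Require Import complex spectral sesquilinear.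
Import Order.TTheory GRing.Theory Num.Theory.
Import numFieldNormedType.Exports.
Set Implicit Arguments. Unset Strict Implicit. Unset Printing Implicit Defensive.
Local Open Scope ring_scope.

Section Frob.
Variables (R : realType) (n p : nat).
Implicit Types X Y : 'M[R]_(n, p).

Lemma frobE X Y : frob X Y = \sum_(i < n) \sum_(j < p) X i j * Y i j.
Proof.
rewrite /frob /mxtrace exchange_big /=; apply: eq_bigr => j _.
rewrite mxE; apply: eq_bigr => i _; by rewrite mxE.
Qed.

Lemma frobC X Y : frob X Y = frob Y X.
Proof. by rewrite !frobE; apply: eq_bigr => i _; apply: eq_bigr => j _; rewrite mulrC. Qed.

Lemma frob_ge0 X : 0 <= frob X X.
Proof. by rewrite frobE; apply: sumr_ge0 => i _; apply: sumr_ge0 => j _; rewrite -expr2 sqr_ge0. Qed.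

Lemma frob_eq0 X : frob X X = 0 -> X = 0.
Proof.
rewrite frobE => H; apply/matrixP => i j; rewrite mxE.
have Hi : \sum_(j < p) X i j * X i j = 0.
  apply: (psumr_eq0P (P := predT) (F := fun i => \sum_(j < p) X i j * X i j)) => //.
  by move=> k _; apply: sumr_ge0 => l _; rewrite -expr2 sqr_ge0.
have /eqP : X i j * X i j = 0.
  apply: (psumr_eq0P (P := predT) (F := fun j => X i j * X i j)) => //.
  by move=> k _; rewrite -expr2 sqr_ge0.
by rewrite mulf_eq0 orbb => /eqP.
Qed.

Lemma frob_sumZ (I J : finType) (c : I -> R) (d : J -> R) (X : I -> 'M[R]_(n,p)) (Y : J -> 'M[R]_(n,p)) :
  frob (\sum_a c a *: X a) (\sum_b d b *: Y b) = \sum_a \sum_b c a * d b * frob (X a) (Y b).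
Proof.
rewrite frobE.
under eq_bigr do under eq_bigr do rewrite !summxE big_distrl /=.
under eq_bigr do rewrite exchange_big /=.
rewrite exchange_big /=; apply: eq_bigr => a _.
under eq_bigr do under eq_bigr do rewrite big_distrr /=.
under eq_bigr do rewrite exchange_big /=.
rewrite exchange_big /=; apply: eq_bigr => b _.
rewrite frobE big_distrr /=; apply: eq_bigr => i _.
rewrite big_distrr /=; apply: eq_bigr => j _.
by rewrite !mxE mulrACA.
Qed.

Lemma frobZl k X Y : frob (k *: X) Y = k * frob X Y.
Proof. rewrite !frobE big_distrr; apply: eq_bigr => i _; rewrite big_distrr; apply: eq_bigr => j _; by rewrite mxE -mulrA. Qed.
Lemma frobNl X Y : frob (- X) Y = - frob X Y.
Proof. by rewrite -scaleN1r frobZl mulN1r. Qed.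
Lemma frobNr X Y : frob X (- Y) = - frob X Y.
Proof. by rewrite frobC frobNl frobC. Qed.
End Frob.

Section Part2.
Variables (R : realType) (n p : nat) (I : finType) (P Q : I -> 'M[R]_(n,p)) (w : I -> R).
Hypothesis HN : forall a b, w a != w b -> w a != - w b ->
  [/\ frob (P a) (P b) = 0, frob (Q a) (Q b) = 0, frob (P a) (Q b) = 0 & frob (Q a) (P b) = 0].
Hypothesis HS : forall a b, w a = w b -> w a != 0 ->
  frob (P a) (P b) = frob (Q a) (Q b) /\ frob (P a) (Q b) + frob (Q a) (P b) = 0.
Hypothesis HO : forall a b, w a = - w b -> w a != 0 ->
  frob (P a) (P b) + frob (Q a) (Q b) = 0 /\ frob (P a) (Q b) = frob (Q a) (P b).

Definition cP f a : R := (w a == f)%:R + (w a == - f)%:R.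
Definition cQ f a : R := (w a == f)%:R - (w a == - f)%:R.
Definition Pv f := \sum_a cP f a *: P a.
Definition Qv f := \sum_a cQ f a *: Q a.

Lemma cPQ_spec f (f0 : 0 < f) a :
  [\/ [/\ w a = f, cP f a = 1 & cQ f a = 1],
      [/\ w a = - f, cP f a = 1 & cQ f a = -1] |
      [/\ w a != f, w a != - f, cP f a = 0 & cQ f a = 0]].
Proof.
rewrite /cP /cQ.
have [E1|N1] := eqVneq (w a) f; have [E2|N2] := eqVneq (w a) (- f).
- by exfalso; move: E2; rewrite E1 => /eqP; rewrite -addr_eq0 -mulr2n mulrn_eq0 /= gt_eqF.
- by apply: Or31; rewrite addr0 subr0.
- by apply: Or32; rewrite add0r sub0r.
- by apply: Or33; rewrite addr0 subr0.
Qed.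

Lemma key_orth f g (f0 : 0 < f) (g0 : 0 < g) (fg : f != g) a b : (cP f a != 0) || (cQ f a != 0) -> (cP g b != 0) || (cQ g b != 0) ->
   [/\ frob (P a) (P b) = 0, frob (Q a) (Q b) = 0, frob (P a) (Q b) = 0 & frob (Q a) (P b) = 0].
Proof.
case: (cPQ_spec f0 a) => [][]; last first.
  by move=> _ _ -> ->; rewrite eqxx /= => F; discriminate F.
all: move=> wa _ _ _; case: (cPQ_spec g0 b) => [][]; last first.
all: try (by move=> _ _ -> ->; rewrite eqxx /= ?orbF => F; discriminate F).
all: move=> wb _ _ _; apply: HN; rewrite wa wb; apply/eqP => E; move/eqP: fg; apply; lra.
Qed.

Lemma Vorth f g : 0 < f -> 0 < g -> f != g ->
  [/\ frob (Pv f) (Pv g) = 0, frob (Qv f) (Qv g) = 0 & frob (Pv f) (Qv g) = 0].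
Proof.
move=> f0 g0 fg.
have key := key_orth f0 g0 fg.
rewrite /Pv /Qv !frob_sumZ; split; apply: big1 => a _; apply: big1 => b _.
- have [->|ha] := eqVneq (cP f a) 0; first by rewrite !mul0r.
  have [->|hb] := eqVneq (cP g b) 0; first by rewrite mulr0 mul0r.
  by case: (key a b); rewrite ?ha ?hb ?orbT // => -> _ _ _; rewrite mulr0.
- have [->|ha] := eqVneq (cQ f a) 0; first by rewrite !mul0r.
  have [->|hb] := eqVneq (cQ g b) 0; first by rewrite mulr0 mul0r.
  by case: (key a b); rewrite ?ha ?hb ?orbT // => _ -> _ _; rewrite mulr0.
- have [->|ha] := eqVneq (cP f a) 0; first by rewrite !mul0r.
  have [->|hb] := eqVneq (cQ g b) 0; first by rewrite mulr0 mul0r.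
  by case: (key a b); rewrite ?ha ?hb ?orbT // => _ _ -> _; rewrite mulr0.
Qed.

Lemma Vsame1 f : 0 < f -> frob (Pv f) (Pv f) = frob (Qv f) (Qv f).
Proof.
move=> f0.
apply/eqP; rewrite -subr_eq0; apply/eqP.
rewrite /Pv /Qv !frob_sumZ -sumrB; apply: big1 => a _; rewrite -sumrB; apply: big1 => b _.
case: (cPQ_spec f0 a) => [][]; last by move=> _ _ -> ->; rewrite !mul0r subrr.
all: move=> wa -> ->; case: (cPQ_spec f0 b) => [][]; last by move=> _ _ -> ->; rewrite !mulr0 !mul0r subrr.
all: move=> wb -> ->; rewrite ?mulN1r ?mulr1 ?mul1r ?mulrN1 ?opprK ?mulNr ?mul1r.
- by move: (@HS a b); rewrite wa wb (gt_eqF f0) => /(_ erefl isT) [-> _]; rewrite subrr.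
- by rewrite opprK; move: (@HO a b); rewrite wa wb opprK (gt_eqF f0) => /(_ erefl isT) [-> _].
- by move: (@HO a b); rewrite wa wb oppr_eq0 (gt_eqF f0) => /(_ erefl isT) [-> _].
- by move: (@HS a b); rewrite wa wb oppr_eq0 (gt_eqF f0) => /(_ erefl isT) [-> _]; rewrite subrr.
Qed.

Lemma Vsame2' f : 0 < f -> frob (Pv f) (Qv f) + frob (Qv f) (Pv f) = 0.
Proof.
move=> f0.
rewrite /Pv /Qv !frob_sumZ -big_split; apply: big1 => a _ /=; rewrite -big_split; apply: big1 => b _ /=.
case: (cPQ_spec f0 a) => [][]; last by move=> _ _ -> ->; rewrite !mul0r addr0.
all: move=> wa -> ->; case: (cPQ_spec f0 b) => [][]; last by move=> _ _ -> ->; rewrite !mulr0 !mul0r addr0.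
all: move=> wb -> ->; rewrite ?mulN1r ?mulr1 ?mul1r ?mulrN1 ?mulNr.
- by move: (@HS a b); rewrite wa wb (gt_eqF f0) => /(_ erefl isT) [_ ->].
- by rewrite mul1r; move: (@HO a b); rewrite wa wb opprK (gt_eqF f0) => /(_ erefl isT) [_ ->]; rewrite addNr.
- by move: (@HO a b); rewrite wa wb oppr_eq0 (gt_eqF f0) => /(_ erefl isT) [_ ->]; rewrite subrr.
- by rewrite mul1r -opprD; move: (@HS a b); rewrite wa wb oppr_eq0 (gt_eqF f0) => /(_ erefl isT) [_ ->]; rewrite oppr0.
Qed.

Lemma Vsame2 f : 0 < f -> frob (Pv f) (Qv f) = 0.
Proof.
move=> f0; have := Vsame2' f0.
by rewrite (frobC (Qv f)) => /eqP; rewrite -mulr2n mulrn_eq0 /= => /eqP.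
Qed.

Definition sv := undup [seq `|w a| | a <- enum I & w a != 0].

Lemma sv_pos f : f \in sv -> 0 < f.
Proof.
rewrite mem_undup => /mapP [a]; rewrite mem_filter => /andP [wa _] ->.
by rewrite normr_gt0.
Qed.

Lemma decomp t : \sum_a (cos (w a * t) *: P a - sin (w a * t) *: Q a) =
  \sum_a (w a == 0)%:R *: P a + \sum_(f <- sv) (cos (f * t) *: Pv f - sin (f * t) *: Qv f).
Proof.
rewrite /Pv /Qv.
under [X in _ = _ + X]eq_bigr do rewrite !scaler_sumr -sumrB.
rewrite exchange_big /= -big_split /=; apply: eq_bigr => a _.
have [wa0|wa0] := eqVneq (w a) 0.
  rewrite wa0 /= mulr1n mul0r cos0 sin0 scale1r scale0r subr0 big1_seq ?addr0 //.
  move=> f /andP [_ /sv_pos f0].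
  case: (cPQ_spec f0 a) => [][].
  - by move=> E; move: wa0; rewrite E => F; move: f0; rewrite F ltxx.
  - by move=> E; move: wa0; rewrite E => /eqP; rewrite oppr_eq0 (gt_eqF f0).
  - by move=> _ _ -> ->; rewrite !scale0r !scaler0 subrr.
have mem : `|w a| \in sv.
  by rewrite mem_undup; apply/mapP; exists a => //; rewrite mem_filter wa0 mem_enum.
rewrite (bigD1_seq _ mem (undup_uniq _)) /= big1_seq ?addr0; last first.
  move=> f /andP [fn /sv_pos f0].
  case: (cPQ_spec f0 a) => [][].
  - by move=> E; move: fn; rewrite E gtr0_norm // eqxx.
  - by move=> E; move: fn; rewrite E normrN gtr0_norm // eqxx.
  - by move=> _ _ -> ->; rewrite !scale0r !scaler0 subrr.
rewrite /= mulr0n scale0r add0r.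
have f0 : 0 < `|w a| by rewrite normr_gt0.
case: (cPQ_spec f0 a) => [][].
- by move=> E -> ->; rewrite -E !scale1r.
- move=> E -> ->; have E' : `|w a| = - w a by lra.
  rewrite E' mulNr cosN sinN scale1r scaleN1r scaleNr scalerN opprK.
  done.
- move=> N1 N2 _ _; exfalso; case: (lerP 0 (w a)) => h.
  + by move/eqP: N1; apply; rewrite ger0_norm.
  + by move/eqP: N2; apply; rewrite ltr0_norm ?opprK.
Qed.

Lemma Vzero f : 0 < f -> Pv f = 0 -> Qv f = 0.
Proof.
move=> f0 h; apply: frob_eq0; rewrite -Vsame1 // h frobE big1 // => i _.
by rewrite big1 // => j _; rewrite mxE mul0r.
Qed.

Lemma scale_helper (k c s : R) (X Y : 'M[R]_(n,p)) : k != 0 ->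
  c *: X - s *: Y = k *: (c *: (k^-1 *: X) + s *: (k^-1 *: - Y)).
Proof.
move=> k0; rewrite scalerDr !scalerA ![k * _ / k]mulrC !mulrA mulVf // !mul1r.
by rewrite scalerN.
Qed.

Theorem part2_main (g : R -> 'M[R]_(n,p)) :
 (forall t, g t = \sum_a (cos (w a * t) *: P a - sin (w a * t) *: Q a)) ->
 exists (m : nat) (a b : nat -> R) (C0 : 'M[R]_(n, p)) (E : nat -> 'M[R]_(n, p)),
    (forall i j : nat, (i < m.*2)%N -> (j < m.*2)%N -> frob (E i) (E j) = (i == j)%:R) /\
    forall t : R, g t = C0 + \sum_(i < m) a i *: (cos (b i * t) *: E i.*2 + sin (b i * t) *: E i.*2.+1).
Proof.
move=> Hg.
set L := [seq f <- sv | Pv f != 0].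
have Lpos : forall f, f \in L -> 0 < f by move=> f; rewrite mem_filter => /andP [_ /sv_pos].
have LPv : forall f, f \in L -> Pv f != 0 by move=> f; rewrite mem_filter => /andP [].
have Luniq : uniq L := filter_uniq _ (undup_uniq _).
pose nrm f := Num.sqrt (frob (Pv f) (Pv f)).
have nrm_gt0 : forall f, f \in L -> 0 < nrm f.
  move=> f fL; rewrite sqrtr_gt0 lt_def frob_ge0 andbT.
  by apply/eqP => /frob_eq0 h; move: (LPv f fL); rewrite h eqxx.
have nrm2 : forall f, nrm f ^+ 2 = frob (Pv f) (Pv f) by move=> f; rewrite sqr_sqrtr // frob_ge0.
exists (size L), (fun i => nrm (nth 0 L i)), (fun i => nth 0 L i), (\sum_a (w a == 0)%:R *: P a),
 (fun k => (nrm (nth 0 L k./2))^-1 *: (if odd k then - Qv (nth 0 L k./2) else Pv (nth 0 L k./2))).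
split.
  move=> i j hi hj.
  have hi' : (i./2 < size L)%N by rewrite ltn_half_double.
  have hj' : (j./2 < size L)%N by rewrite ltn_half_double.
  have fiL := mem_nth 0 hi'; have fjL := mem_nth 0 hj'.
  rewrite frobZl frobC frobZl frobC.
  have [hij|hij] := eqVneq i./2 j./2.
    rewrite -hij.
    have ni0 : nrm (nth 0 L i./2) != 0 by rewrite gt_eqF // nrm_gt0.
    have V1 := Vsame1 (Lpos _ fiL); have V2 := Vsame2 (Lpos _ fiL).
    case oi: (odd i); case oj: (odd j).
    - have -> : (i == j) = true by apply/eqP; rewrite -(odd_double_half i) -(odd_double_half j) oi oj hij.
      rewrite mulr1n frobNl frobC frobNl opprK -V1 -nrm2 expr2 (mulKf ni0) mulVf //.
    - have -> : (i == j) = false.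
        by apply/negbTE/eqP => ij; move: oi; rewrite ij oj.
      by rewrite frobNl frobC V2 oppr0 !mulr0.
    - have -> : (i == j) = false.
        by apply/negbTE/eqP => ij; move: oi; rewrite ij oj.
      by rewrite frobC frobNl frobC V2 oppr0 !mulr0.
    - have -> : (i == j) = true by apply/eqP; rewrite -(odd_double_half i) -(odd_double_half j) oi oj hij.
      rewrite mulr1n -nrm2 expr2 (mulKf ni0) mulVf //.
  have fij : nth 0 L i./2 != nth 0 L j./2 by rewrite nth_uniq.
  have -> : (i == j) = false by apply/negbTE/eqP => ij; move: hij; rewrite ij eqxx.
  have [oh1 oh2 oh3] := Vorth (Lpos _ fiL) (Lpos _ fjL) fij.
  have fji : nth 0 L j./2 != nth 0 L i./2 by rewrite eq_sym.
  have [_ _ oh4] := Vorth (Lpos _ fjL) (Lpos _ fiL) fji.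
  rewrite /= mulr0n.
  case: (odd i); case: (odd j); rewrite ?frobNl ?frobNr ?opprK ?oh1 ?oh2 ?oh3 ?(frobC (Qv _) (Pv _)) ?oh4 ?oppr0 ?mulr0 //.
move=> t; rewrite Hg decomp; congr (_ + _).
rewrite (bigID (fun f => Pv f != 0)) /= [X in _ + X]big1_seq ?addr0; last first.
  move=> f /andP [/negPn/eqP Pf0 /sv_pos f0]; by rewrite Pf0 (Vzero f0 Pf0) !scaler0 subrr.
rewrite -big_filter -/L (big_nth 0) big_mkord; apply: eq_bigr => i _.
rewrite /= doubleK uphalf_double odd_double /=.
apply: scale_helper; apply: lt0r_neq0; apply: nrm_gt0; exact: mem_nth.
Qed.
End Part2.

Local Notation Re := complex.Re.
Local Notation Im := complex.Im.

Section Cx.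
Variable R : realType.
Local Notation C := (R[i] : numClosedFieldType).

Definition MC m n (X : 'M[R]_(m,n)) : 'M[C]_(m,n) := map_mx (real_complex R) X.
Definition adj m n (X : 'M[C]_(m,n)) : 'M[C]_(n,m) := map_mx Num.conj (X^T).
Definition expi (x : R) : C := (cos x +i* sin x)%C.
Definition ReMx m n (X : 'M[C]_(m,n)) : 'M[R]_(m,n) := map_mx (@Re R) X.
Definition ImMx m n (X : 'M[C]_(m,n)) : 'M[R]_(m,n) := map_mx (@Im R) X.

Lemma conjCE (z : C) : Num.conj z = conjc z.
Proof.
rewrite [z in LHS]Crect rmorphD rmorphM /= conjCi.
rewrite !conj_Creal ?Creal_Re ?Creal_Im //.
rewrite -complexRe -complexIm; case: z => a b /=.
apply/eqP; rewrite eq_complex /=; apply/andP; split; apply/eqP; simpc; lra.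
Qed.

Lemma ReM_ (x y : C) : Re (x * y) = Re x * Re y - Im x * Im y.
Proof. by case: x => a b; case: y => c d. Qed.
Lemma ImM_ (x y : C) : Im (x * y) = Re x * Im y + Im x * Re y.
Proof. by case: x => a b; case: y => c d /=; rewrite addrC. Qed.
Lemma ReD (x y : C) : Re (x + y) = Re x + Re y.
Proof. by case: x => a b; case: y => c d. Qed.
Lemma ImD (x y : C) : Im (x + y) = Im x + Im y.
Proof. by case: x => a b; case: y => c d. Qed.
Lemma Re_sum (I : Type) (r : seq I) (P : pred I) (F : I -> C) :
  Re (\sum_(i <- r | P i) F i) = \sum_(i <- r | P i) Re (F i).
Proof. by apply: (big_morph (@Re R) ReD). Qed.
Lemma Im_sum (I : Type) (r : seq I) (P : pred I) (F : I -> C) :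
  Im (\sum_(i <- r | P i) F i) = \sum_(i <- r | P i) Im (F i).
Proof. by apply: (big_morph (@Im R) ImD). Qed.
Lemma Re_conj (z : C) : Re (Num.conj z) = Re z.
Proof. by rewrite conjCE; case: z. Qed.
Lemma Im_conj (z : C) : Im (Num.conj z) = - Im z.
Proof. by rewrite conjCE; case: z. Qed.

Lemma trTE (T : comNzRingType) n p (X Y : 'M[T]_(n,p)) :
  \tr (X^T *m Y) = \sum_(i < n) \sum_(j < p) X i j * Y i j.
Proof.
rewrite /mxtrace exchange_big /=; apply: eq_bigr => j _.
rewrite mxE; apply: eq_bigr => i _; by rewrite mxE.
Qed.

Lemma tradjE n p (X Y : 'M[C]_(n,p)) :
  \tr (adj X *m Y) = \sum_(i < n) \sum_(j < p) Num.conj (X i j) * Y i j.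
Proof.
rewrite /adj -map_trmx trTE; apply: eq_bigr => i _; apply: eq_bigr => j _.
by rewrite mxE.
Qed.

Lemma Re_bc n p (X Y : 'M[C]_(n,p)) :
  Re (\tr (X^T *m Y)) = frob (ReMx X) (ReMx Y) - frob (ImMx X) (ImMx Y).
Proof.
rewrite trTE !frobE Re_sum -sumrB; apply: eq_bigr => i _.
rewrite Re_sum -sumrB; apply: eq_bigr => j _; by rewrite ReM_ !mxE.
Qed.
Lemma Im_bc n p (X Y : 'M[C]_(n,p)) :
  Im (\tr (X^T *m Y)) = frob (ReMx X) (ImMx Y) + frob (ImMx X) (ReMx Y).
Proof.
rewrite trTE !frobE Im_sum -big_split; apply: eq_bigr => i _.
rewrite Im_sum -big_split; apply: eq_bigr => j _; by rewrite ImM_ !mxE.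
Qed.
Lemma Re_hc n p (X Y : 'M[C]_(n,p)) :
  Re (\tr (adj X *m Y)) = frob (ReMx X) (ReMx Y) + frob (ImMx X) (ImMx Y).
Proof.
rewrite tradjE !frobE Re_sum -big_split; apply: eq_bigr => i _.
rewrite Re_sum -big_split; apply: eq_bigr => j _.
by rewrite ReM_ Re_conj Im_conj !mxE mulNr opprK.
Qed.
Lemma Im_hc n p (X Y : 'M[C]_(n,p)) :
  Im (\tr (adj X *m Y)) = frob (ReMx X) (ImMx Y) - frob (ImMx X) (ReMx Y).
Proof.
rewrite tradjE !frobE Im_sum -sumrB; apply: eq_bigr => i _.
rewrite Im_sum -sumrB; apply: eq_bigr => j _.
by rewrite ImM_ Re_conj Im_conj !mxE mulNr.
Qed.

Lemma rep_real n p (I : finType) (G : 'M[R]_(n,p)) (X : I -> 'M[C]_(n,p)) (w : I -> R) t :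
  MC G = \sum_a expi (w a * t) *: X a ->
  G = \sum_a (cos (w a * t) *: ReMx (X a) - sin (w a * t) *: ImMx (X a)).
Proof.
move=> H; apply/matrixP => i j.
have := congr1 (fun M : 'M[C]_(n,p) => Re (M i j)) H.
rewrite /= /MC mxE /= => ->.
rewrite !summxE Re_sum; apply: eq_bigr => a _.
by rewrite !mxE ReM_ /=.
Qed.

End Cx.

Local Open Scope classical_set_scope.
Local Open Scope ring_scope.
Section Scal.
Variable R : realType.
Local Notation C := (R[i] : numClosedFieldType).

Definition zi (x : R) : C := (0 +i* x)%C.

Lemma zi_even (x : R) m : zi x ^+ (m.*2) = (((-1) ^+ m * x ^+ (m.*2))%:C)%C.
Proof.
have z2 : zi x ^+ 2 = ((- x ^+ 2)%:C)%C.
  rewrite expr2 /zi; apply/eqP; rewrite eq_complex /=; apply/andP; split; apply/eqP.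
    by rewrite mul0r expr2 sub0r.
  by rewrite mul0r mulr0 addr0.
rewrite -mul2n exprM z2 -rmorphXn /=; congr (_%:C)%C.
by rewrite exprM -exprMn mulN1r.
Qed.

Lemma ReZC (r : R) (w : C) : Re ((r%:C)%C * w) = r * Re w.
Proof. by case: w => a b /=; rewrite mul0r subr0. Qed.
Lemma ImZC (r : R) (w : C) : Im ((r%:C)%C * w) = r * Im w.
Proof. by case: w => a b /=; rewrite mul0r addr0. Qed.

Lemma zi_pow (x : R) k :
  Re (zi x ^+ k) = (~~ odd k)%:R * (-1) ^+ k./2 * x ^+ k /\
  Im (zi x ^+ k) = (odd k)%:R * (-1) ^+ k.-1./2 * x ^+ k.
Proof.
rewrite -[k](odd_double_half k); case: (odd k) => /=.
  rewrite add1n exprS zi_even mulrC ReZC ImZC /= doubleK.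
  rewrite odd_double /= uphalf_double; split.
    by rewrite mul0r mulr0 mul0r.
  by rewrite mul1r exprSr mulrA.
rewrite add0n zi_even /= odd_double doubleK /=; split.
  by rewrite mul1r.
by rewrite /= mulr0n !mul0r.
Qed.

Definition sig (N : nat) (x : R) : C := \sum_(0 <= k < N) (((k`!%:R)^-1)%:C)%C * zi x ^+ k.

Lemma cvg_Re_sig x : (fun N => Re (sig N x)) @ \oo --> cos x.
Proof.
have -> : (fun N => Re (sig N x)) = series (cos_coeff x).
  apply/funext => N; rewrite /sig Re_sum /series /=; apply: eq_bigr => k _.
  by rewrite ReZC (zi_pow x k).1 mulrC.
rewrite unlock; exact: is_cvg_series_cos_coeff.
Qed.

Lemma cvg_Im_sig x : (fun N => Im (sig N x)) @ \oo --> sin x.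
Proof.
have -> : (fun N => Im (sig N x)) = series (sin_coeff x).
  apply/funext => N; rewrite /sig Im_sum /series /=; apply: eq_bigr => k _.
  by rewrite ImZC (zi_pow x k).2 mulrC.
rewrite unlock; exact: is_cvg_series_sin_coeff.
Qed.

Lemma cvg_sumr {V : normedModType R} (I : Type) (r : seq I) (f : I -> nat -> V) (l : I -> V) :
 (forall i, f i @ \oo --> l i) -> (fun N => \sum_(i <- r) f i N) @ \oo --> \sum_(i <- r) l i.
Proof.
move=> H; elim: r => [|i r IH].
  under eq_cvg do rewrite big_nil.
  rewrite big_nil; exact: cvg_cst.
under eq_cvg do rewrite big_cons.
rewrite big_cons; exact: cvgD.
Qed.

Lemma cvg_mx_entries m n (s : nat -> 'M[R]_(m,n)) (Y : 'M[R]_(m,n)) :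
 (forall a b, (fun N => s N a b) @ \oo --> Y a b) -> s @ \oo --> Y.
Proof.
move=> H.
have -> : s = fun N => \sum_a \sum_b s N a b *: delta_mx a b.
  by apply/funext => N; rewrite -matrix_sum_delta.
rewrite [X in _ --> X]matrix_sum_delta.
apply: cvg_sumr => a; apply: cvg_sumr => b.
exact: cvgZl.
Qed.
Lemma expiD (a b : R) : expi a * expi b = expi (a + b).
Proof.
rewrite /expi cosD sinD; apply/eqP; rewrite eq_complex /=; apply/andP; split => //.
by rewrite addrC.
Qed.

Lemma adjM m n l (X : 'M[C]_(m,n)) (Y : 'M[C]_(n,l)) : adj (X *m Y) = adj Y *m adj X.
Proof. by rewrite /adj trmx_mul map_mxM. Qed.

Lemma adjMC m n (X : 'M[R]_(m,n)) : adj (MC X) = MC (X^T).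
Proof.
rewrite /adj /MC map_trmx -map_mx_comp; apply/matrixP => i j; rewrite !mxE /=.
by rewrite conjCE conjc_real.
Qed.

Lemma MCM m n l (X : 'M[R]_(m,n)) (Y : 'M[R]_(n,l)) : MC (X *m Y) = MC X *m MC Y.
Proof. by rewrite /MC map_mxM. Qed.
Lemma MCT m n (X : 'M[R]_(m,n)) : MC (X^T) = (MC X)^T.
Proof. by rewrite /MC map_trmx. Qed.
Lemma MC1 m : MC (1%:M : 'M[R]_m) = 1%:M.
Proof. by rewrite /MC map_mx1. Qed.



End Scal.

Section Spec.
Variable R : realType.
Local Notation C := (R[i] : numClosedFieldType).
Variables (q : nat) (S : 'M[R]_q).
Hypothesis hS : S^T = - S.

Let SC := MC S.
Let V := spectralmx SC.
Let d := spectral_diag SC.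

Lemma adjSC : adj SC = - SC.
Proof. by rewrite /SC adjMC hS /MC map_mxN. Qed.

Lemma SC_normal : SC \is normalmx.
Proof.
apply/normalmxP; rewrite -[(SC ^t* )%sesqui]/(adj SC) adjSC.
by rewrite mulmxN mulNmx.
Qed.

Lemma Vunit : V *m adj V = 1%:M.
Proof. apply/unitarymxP; exact: spectral_unitarymx. Qed.

Lemma Vunit' : adj V *m V = 1%:M.
Proof. by have := mulmxKtV (1%:M) (spectral_unitarymx SC) erefl; rewrite mul1mx. Qed.

Lemma SCE : SC = adj V *m diag_mx d *m V.
Proof.
have := SC_normal; move/orthomx_spectralP.
by rewrite invmx_unitary // spectral_unitarymx.
Qed.


Definition Kp (j : 'I_q) : 'M[C]_q := adj V *m delta_mx j j *m V.

Lemma sum_delta1 : \sum_(j < q) delta_mx j j = 1%:M :> 'M[C]_q.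
Proof.
rewrite -diag_const_mx diag_mx_sum_delta; apply: eq_bigr => j _.
by rewrite mxE scale1r.
Qed.

Lemma Ksum : \sum_j Kp j = 1%:M.
Proof. by rewrite /Kp -mulmx_suml -mulmx_sumr sum_delta1 mulmx1 Vunit'. Qed.

Lemma KK j j' : Kp j *m Kp j' = (j == j')%:R *: Kp j.
Proof.
rewrite /Kp !mulmxA -(mulmxA _ V (adj V)) Vunit mulmx1.
rewrite -(mulmxA _ (delta_mx j j) (delta_mx j' j')) mul_delta_mx_cond.
case: (eqVneq j j') => [<-|nj].
  by rewrite mulr1n scale1r.
by rewrite mulr0n scale0r mulmx0 mul0mx.
Qed.

Lemma adjK (X : 'M[C]_q) : adj (adj X) = X.
Proof. exact: trmxCK. Qed.

Lemma Kadj j : adj (Kp j) = Kp j.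
Proof.
rewrite /Kp !adjM adjK mulmxA; congr (_ *m _ *m _).
apply/matrixP => a b; rewrite !mxE.
by rewrite conjC_nat andbC.
Qed.

Lemma SCsum : SC = \sum_j d 0 j *: Kp j.
Proof.
rewrite {1}SCE diag_mx_sum_delta mulmx_sumr mulmx_suml; apply: eq_bigr => j _.
by rewrite /Kp -scalemxAr -scalemxAl.
Qed.

Lemma sumK_mul (x y : 'I_q -> C) :
  (\sum_j x j *: Kp j) *m (\sum_j y j *: Kp j) = \sum_j (x j * y j) *: Kp j.
Proof.
rewrite mulmx_suml; apply: eq_bigr => i _.
rewrite mulmx_sumr (bigD1 i) //= big1 ?addr0.
  by rewrite -scalemxAl -scalemxAr KK eqxx scale1r scalerA.
by move=> j ji; rewrite -scalemxAl -scalemxAr KK eq_sym (negbTE ji) scale0r !scaler0.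
Qed.

Lemma SCK j : SC *m Kp j = d 0 j *: Kp j.
Proof.
rewrite SCsum -[Kp j in X in X = _]scale1r.
have -> : 1 *: Kp j = \sum_i (i == j)%:R *: Kp i.
  rewrite (bigD1 j) //= big1 ?addr0 ?eqxx //.
  by move=> i /negbTE ->; rewrite scale0r.
rewrite sumK_mul (bigD1 j) //= big1 ?addr0 ?eqxx ?mulr1 //.
by move=> i /negbTE ->; rewrite mulr0 scale0r.
Qed.

Lemma KSC j : Kp j *m SC = d 0 j *: Kp j.
Proof.
rewrite SCsum -[Kp j in X in X = _]scale1r.
have -> : 1 *: Kp j = \sum_i (i == j)%:R *: Kp i.
  rewrite (bigD1 j) //= big1 ?addr0 ?eqxx //.
  by move=> i /negbTE ->; rewrite scale0r.
rewrite sumK_mul (bigD1 j) //= big1 ?addr0 ?eqxx ?mul1r //.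
by move=> i /negbTE ->; rewrite mul0r scale0r.
Qed.

Lemma d_conj j : Num.conj (d 0 j) = - d 0 j.
Proof.
have hD : diag_mx d = V *m SC *m adj V.
  by rewrite SCE !mulmxA Vunit mul1mx -mulmxA Vunit mulmx1.
have : adj (diag_mx d) = - diag_mx d.
  by rewrite {1}hD !adjM adjK adjSC mulNmx mulmxN mulmxA -hD.
move/matrixP/(_ j j); rewrite !mxE eqxx !mulr1n.
by [].
Qed.

Definition th j := Im (d 0 j).

Lemma d_imag j : d 0 j = zi (th j).
Proof.
have := d_conj j; rewrite conjCE /th; case: (d 0 j) => a b /eqP; rewrite eq_complex /= => /andP [/eqP Ha _].
rewrite /zi; congr (Complex _ _); lra.
Qed.

Lemma SCT : SC^T = - SC.
Proof. by rewrite /SC -MCT hS /MC map_mxN. Qed.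

Lemma zi_add (x y : R) : zi x + zi y = zi (x + y).
Proof. by rewrite /zi; apply/eqP; rewrite eq_complex /= addr0 !eqxx. Qed.

Lemma zi_eq0 (x : R) : (zi x == 0) = (x == 0).
Proof. by rewrite /zi eq_complex /= eqxx. Qed.

Lemma KT j j' : th j + th j' != 0 -> (Kp j)^T *m Kp j' = 0.
Proof.
move=> h.
have e2 : (Kp j)^T *m SC = - (d 0 j *: (Kp j)^T).
  have : (SC^T *m Kp j)^T = (Kp j)^T *m SC by rewrite trmx_mul trmxK.
  rewrite SCT mulNmx SCK => <-.
  by rewrite linearN /= linearZ.
have e : (d 0 j + d 0 j') *: ((Kp j)^T *m Kp j') = 0.
  have := congr1 (fun X => X *m Kp j') e2; rewrite /= -mulmxA SCK -scalemxAr mulNmx -scalemxAl.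
  by move=> H; rewrite scalerDl H subrr.
move/eqP: e; rewrite scaler_eq0 => /orP [|/eqP //].
by rewrite !d_imag zi_add zi_eq0 (negbTE h).
Qed.

Lemma KT' j j' : th j + th j' != 0 -> Kp j' *m (Kp j)^T = 0.
Proof.
move=> h.
have e2 : SC *m (Kp j)^T = - (d 0 j *: (Kp j)^T).
  have : (Kp j *m SC)^T = SC^T *m (Kp j)^T by rewrite trmx_mul.
  rewrite KSC SCT mulNmx => H.
  by rewrite -[LHS]opprK -H linearZ.
have e : (d 0 j + d 0 j') *: (Kp j' *m (Kp j)^T) = 0.
  have := congr1 (fun X => Kp j' *m X) e2; rewrite /= mulmxA KSC -scalemxAl mulmxN -scalemxAr.
  by move=> H; rewrite scalerDl H subrr.
move/eqP: e; rewrite scaler_eq0 => /orP [|/eqP //].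
by rewrite !d_imag zi_add zi_eq0 (negbTE h).
Qed.

Lemma MCX (X : 'M[R]_q) k : MC (X ^+ k) = (MC X) ^+ k.
Proof.
elim: k => [|k IH]; first by rewrite !expr0 MC1.
by rewrite !exprS -!mulmxE MCM IH.
Qed.

Lemma powK (c : R) k : (MC (c *: S)) ^+ k = \sum_j zi (c * th j) ^+ k *: Kp j.
Proof.
have -> : MC (c *: S) = \sum_j zi (c * th j) *: Kp j.
  rewrite /MC map_mxZ -/(MC S) -/SC SCsum scaler_sumr; apply: eq_bigr => j _.
  rewrite scalerA d_imag; congr (_ *: _).
  by rewrite /zi; apply/eqP; rewrite eq_complex /= !mul0r !mulr0 subr0 addr0 !eqxx.
elim: k => [|k IH].
  by rewrite expr0 -[1]/(1%:M : 'M[C]_q) -Ksum; apply: eq_bigr => j _; rewrite expr0 scale1r.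
by rewrite exprS -mulmxE IH sumK_mul; apply: eq_bigr => j _; rewrite exprS.
Qed.

Lemma MCsN c N : MC (series (fun k => (k`!%:R)^-1 *: (c *: S) ^+ k) N) =
  \sum_j sig N (c * th j) *: Kp j.
Proof.
rewrite /series /= /MC map_mx_sum.
under eq_bigr do rewrite map_mxZ -/(MC _) MCX powK scaler_sumr.
rewrite exchange_big /=; apply: eq_bigr => j _.
rewrite /sig scaler_suml; apply: eq_bigr => k _.
by rewrite scalerA.
Qed.

Let sN c := series (fun k => (k`!%:R)^-1 *: (c *: S) ^+ k).

Lemma sN_entry c N a b : sN c N a b =
  \sum_j (Re (sig N (c * th j)) * Re (Kp j a b) - Im (sig N (c * th j)) * Im (Kp j a b)).
Proof.
have : Re ((MC (sN c N)) a b) = sN c N a b by rewrite /MC mxE.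
rewrite /sN MCsN summxE Re_sum => <-; apply: eq_bigr => j _.
by rewrite mxE ReM_.
Qed.

Lemma sN_entry_Im c N a b : 0 =
  \sum_j (Re (sig N (c * th j)) * Im (Kp j a b) + Im (sig N (c * th j)) * Re (Kp j a b)).
Proof.
have : Im ((MC (sN c N)) a b) = 0 by rewrite /MC mxE.
rewrite /sN MCsN summxE Im_sum => H; rewrite -[LHS]H; apply: eq_bigr => j _.
by rewrite mxE ImM_.
Qed.

Lemma expm_spec c : MC (expm (c *: S)) = \sum_j expi (th j * c) *: Kp j.
Proof.
pose Y := \matrix_(a, b) \sum_j (cos (c * th j) * Re (Kp j a b) - sin (c * th j) * Im (Kp j a b)).
have hY : expm (c *: S) = Y.
  rewrite /expm; apply: cvg_lim.
  exact: (@norm_hausdorff R 'M[R]_q).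
  apply: cvg_mx_entries => a b; rewrite mxE.
  have -> : (fun N => series (fun k => (k`!%:R)^-1 *: (c *: S) ^+ k) N a b) =
     (fun N => \sum_j (Re (sig N (c * th j)) * Re (Kp j a b) - Im (sig N (c * th j)) * Im (Kp j a b))).
    by apply/funext => N; rewrite -sN_entry.
  apply: cvg_sumr => j; apply: cvgB; apply: cvgMr_tmp; [exact: cvg_Re_sig | exact: cvg_Im_sig].
have hI : forall a b, \sum_j (cos (c * th j) * Im (Kp j a b) + sin (c * th j) * Re (Kp j a b)) = 0.
  move=> a b.
  have h1 : (fun N => \sum_j (Re (sig N (c * th j)) * Im (Kp j a b) + Im (sig N (c * th j)) * Re (Kp j a b))) @ \oo
     --> \sum_j (cos (c * th j) * Im (Kp j a b) + sin (c * th j) * Re (Kp j a b)).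
    apply: cvg_sumr => j; apply: cvgD; apply: cvgMr_tmp; [exact: cvg_Re_sig | exact: cvg_Im_sig].
  have h2 : (fun N => \sum_j (Re (sig N (c * th j)) * Im (Kp j a b) + Im (sig N (c * th j)) * Re (Kp j a b))) = fun=> 0.
    by apply/funext => N; rewrite -sN_entry_Im.
  rewrite h2 in h1.
  apply: (cvg_unique _ h1); [exact: norm_hausdorff | exact: cvg_cst].
rewrite hY; apply/matrixP => a b.
have -> : (MC Y) a b = ((Y a b)%:C)%C by rewrite /MC mxE.
have -> : (\sum_j expi (th j * c) *: Kp j) a b = \sum_j expi (th j * c) * Kp j a b.
  by rewrite summxE; apply: eq_bigr => j _; rewrite mxE.
rewrite /Y mxE.
apply/eqP; rewrite eq_complex /=; apply/andP; split; apply/eqP.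
  by rewrite Re_sum; apply: eq_bigr => j _; rewrite ReM_ /expi /= (mulrC (th j)).
apply/esym; rewrite Im_sum; apply: etrans _ (hI a b).
by apply: eq_bigr => j _; rewrite ImM_ /expi /= (mulrC (th j)).
Qed.
End Spec.

Lemma skew_spectral (R : realType) q (S : 'M[R]_q) : S^T = - S ->
  exists (th : 'I_q -> R) (K : 'I_q -> 'M[(R[i] : numClosedFieldType)]_q),
  [/\ forall c, MC (expm (c *: S)) = \sum_j expi (th j * c) *: K j,
      forall j j', K j *m K j' = (j == j')%:R *: K j,
      forall j, adj (K j) = K j,
      forall j j', th j + th j' != 0 -> (K j)^T *m K j' = 0 &
      forall j j', th j + th j' != 0 -> K j' *m (K j)^T = 0].
Proof.
move=> hS; exists (th S), (Kp S); split.
- exact: expm_spec.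
- exact: KK.
- exact: Kadj.
- exact: KT.
- exact: KT'.
Qed.

Local Close Scope classical_set_scope.
Local Open Scope ring_scope.
Section Main.
Variable R : realType.
Local Notation C := (R[i] : numClosedFieldType).



Lemma sum4 n N p (Zc : 'M[C]_(n,N)) (F1 : 'I_N -> C) (K1 : 'I_N -> 'M[C]_N) (Wc : 'M[C]_(N,p))
  (F2 : 'I_p -> C) (K2 : 'I_p -> 'M[C]_p) :
  Zc *m (\sum_j F1 j *: K1 j) *m Wc *m (\sum_l F2 l *: K2 l) =
  \sum_j \sum_l (F1 j * F2 l) *: (Zc *m K1 j *m Wc *m K2 l).
Proof.
rewrite mulmx_sumr; under eq_bigr => l _ do rewrite mulmx_sumr !mulmx_suml.
rewrite exchange_big /=; apply: eq_bigr => j _; apply: eq_bigr => l _.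
by rewrite -!scalemxAr -!scalemxAl scalerA mulrC.
Qed.

Section Orth.
Variables (n N p : nat) (Z : 'M[R]_(n,N)) (W : 'M[R]_(N,p)) (K1 : 'I_N -> 'M[C]_N) (K2 : 'I_p -> 'M[C]_p).
Hypothesis hZ : Z^T *m Z = 1%:M.

Lemma hc_orth :
  (forall j j', K1 j *m K1 j' = (j == j')%:R *: K1 j) ->
  (forall j j', K2 j *m K2 j' = (j == j')%:R *: K2 j) ->
  (forall j, adj (K1 j) = K1 j) -> (forall j, adj (K2 j) = K2 j) ->
  forall a1 a2 b1 b2, (a1 != b1) || (a2 != b2) ->
  \tr (adj (MC Z *m K1 a1 *m MC W *m K2 a2) *m (MC Z *m K1 b1 *m MC W *m K2 b2)) = 0.
Proof.
move=> KK1 KK2 Ka1 Ka2 a1 a2 b1 b2 hab.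
rewrite !adjM Ka1 Ka2 !adjMC !mulmxA.
rewrite -(mulmxA _ (MC Z^T) (MC Z)) -MCM hZ MC1 mulmx1.
rewrite -(mulmxA _ (K1 a1) (K1 b1)) KK1.
case: (eqVneq a1 b1) => [e1|n1]; last by rewrite mulr0n scale0r mulmx0 !mul0mx mxtrace0.
move: hab; rewrite e1 eqxx /= => n2; rewrite mulr1n scale1r.
rewrite mxtrace_mulC !mulmxA KK2 eq_sym (negbTE n2) mulr0n scale0r !mul0mx mxtrace0 //.
Qed.

Lemma bc_orth (th1 : 'I_N -> R) (th2 : 'I_p -> R) :
  (forall j j', th1 j + th1 j' != 0 -> (K1 j)^T *m K1 j' = 0) ->
  (forall j j', th2 j + th2 j' != 0 -> K2 j' *m (K2 j)^T = 0) ->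
  forall a1 a2 b1 b2, (th1 a1 + th1 b1 != 0) || (th2 a2 + th2 b2 != 0) ->
  \tr ((MC Z *m K1 a1 *m MC W *m K2 a2)^T *m (MC Z *m K1 b1 *m MC W *m K2 b2)) = 0.
Proof.
move=> KT1 KT2 a1 a2 b1 b2 hab.
rewrite !trmx_mul -!MCT !mulmxA.
rewrite -(mulmxA _ (MC Z^T) (MC Z)) -MCM hZ MC1 mulmx1.
case/orP: hab => h.
  by rewrite -(mulmxA _ (K1 a1)^T (K1 b1)) KT1 // mulmx0 !mul0mx mxtrace0.
by rewrite mxtrace_mulC !mulmxA KT2 // !mul0mx mxtrace0.
Qed.
End Orth.
End Main.

Theorem corollary3p3 (R : realType) (n p : nat) (hp : (1 <= p)%N) (hnp : (p <= n)%N)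
  (U D : 'M[R]_(n, p)) (hU : stiefel U) (hD : tangent_stiefel U D)
  (k : nat) (Q : 'M[R]_(n, k)) (B : 'M[R]_(k, p)) (hQB : QB_decomp U D Q B) :
  exists (m : nat) (a b : nat -> R) (C0 : 'M[R]_(n, p)) (E : nat -> 'M[R]_(n, p)),
    (forall i j : nat, (i < m.*2)%N -> (j < m.*2)%N ->
       frob (E i) (E j) = (i == j)%:R) /\
    forall t : R,
      stiefel_exp U D Q B t =
      C0 + \sum_(i < m) a i *: (cos (b i * t) *: E i.*2 + sin (b i * t) *: E i.*2.+1).
Proof.
move: hQB => [hQQ hUQ hQB'].
move: hU hD; rewrite /stiefel /tangent_stiefel => hU hD.
set A := U^T *m D.
have hA : A^T = - A by rewrite /A trmx_mul trmxK hD opprK.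
set M := block_mx (2%:R *: A) (- B^T) B (0 : 'M[R]_(k, k)).
have hM : M^T = - M.
  rewrite /M tr_block_mx opp_block_mx linearZ /= hA scalerN linearN /= trmxK trmx0 oppr0 opprK //.
set Z := row_mx U Q.
have hZ : Z^T *m Z = 1%:M.
  have hQU : Q^T *m U = 0 by have := congr1 trmx hUQ; rewrite trmx_mul trmxK trmx0.
  by rewrite /Z tr_row_mx mul_col_row hU hQQ hUQ hQU -scalar_mx_block.
set W := col_mx (1%:M : 'M[R]_p) (0 : 'M[R]_(k, p)).
have [th1 [K1 [E1 KK1 Ka1 KT1 KT1']]] := skew_spectral hM.
have [th2 [K2 [E2 KK2 Ka2 KT2 KT2']]] := skew_spectral hA.
pose X (al : 'I_(p + k) * 'I_p) := MC Z *m K1 al.1 *m MC W *m K2 al.2.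
pose w (al : 'I_(p + k) * 'I_p) := th1 al.1 - th2 al.2.
have hX : forall a b, w a != w b -> \tr (adj (X a) *m X b) = 0.
  move=> [a1 a2] [b1 b2]; rewrite /w /= => hw; apply: hc_orth => //=.
  apply: contraR hw; rewrite negb_or !negbK => /andP [/eqP -> /eqP ->]; by rewrite eqxx.
have bX : forall a b, w a + w b != 0 -> \tr ((X a)^T *m X b) = 0.
  move=> [a1 a2] [b1 b2]; rewrite /w /= => hw; apply: (bc_orth W hZ KT1 KT2').
  apply: contraR hw; rewrite negb_or !negbK => /andP [/eqP h1 /eqP h2].
  by rewrite addrACA h1 -opprD h2 oppr0 addr0.
pose Pm := fun al : 'I_(p + k) * 'I_p => ReMx (X al).
pose Qm := fun al : 'I_(p + k) * 'I_p => ImMx (X al).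
have HN : forall a b, w a != w b -> w a != - w b ->
  [/\ frob (Pm a) (Pm b) = 0, frob (Qm a) (Qm b) = 0, frob (Pm a) (Qm b) = 0 & frob (Qm a) (Pm b) = 0].
  move=> a b h1 h2.
  have e1 := Re_bc (X a) (X b); have e2 := Im_bc (X a) (X b).
  have e3 := Re_hc (X a) (X b); have e4 := Im_hc (X a) (X b).
  rewrite bX in e1 e2; last by rewrite addr_eq0.
  rewrite hX // in e3 e4.
  simpl in e1, e2, e3, e4.
  rewrite /Pm /Qm; split; lra.
have HS : forall a b, w a = w b -> w a != 0 ->
  frob (Pm a) (Pm b) = frob (Qm a) (Qm b) /\ frob (Pm a) (Qm b) + frob (Qm a) (Pm b) = 0.
  move=> a b h1 h2.
  have e1 := Re_bc (X a) (X b); have e2 := Im_bc (X a) (X b).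
  rewrite bX in e1 e2; last by rewrite -h1 -mulr2n mulrn_eq0.
  simpl in e1, e2.
  rewrite /Pm /Qm; split; lra.
have HO : forall a b, w a = - w b -> w a != 0 ->
  frob (Pm a) (Pm b) + frob (Qm a) (Qm b) = 0 /\ frob (Pm a) (Qm b) = frob (Qm a) (Pm b).
  move=> a b h1 h2.
  have e3 := Re_hc (X a) (X b); have e4 := Im_hc (X a) (X b).
  rewrite hX in e3 e4; last first.
    by apply/eqP => h3; move/eqP: h2; apply; lra.
  simpl in e3, e4.
  rewrite /Pm /Qm; split; lra.
have Hrep : forall t, stiefel_exp U D Q B t = \sum_a (cos (w a * t) *: Pm a - sin (w a * t) *: Qm a).
  move=> t; apply: rep_real.
  rewrite /stiefel_exp -/A -/M -/Z -/W !MCM E1 E2 sum4 pair_bigA /=.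
  apply: eq_bigr => [[j l]] _ /=.
  by rewrite expiD /w /= mulrN mulrBl.
exact: (part2_main HN HS HO Hrep).
Qed.
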